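(* Let $m,n,k$ be positive integers. If there exists an orthogonal array $\mathrm{OA}(mn,k,2,2)$, then there exists a set of $k$ mutually orthogonal frequency rectangles of type $\mathrm{FR}(2m,2n;2)$, i.e. a $k$--$\mathrm{MOFR}(2m,2n;2)$.
   Context: A frequency rectangle of type $\mathrm{FR}(m,n;q)$ is an $m\times n$ array on a symbol set $S$ of size $q$ such that each symbol of $S$ appears exactly $n/q$ times in each row and exactly $m/q$ times in each column. Two frequency rectangles of the same type (on the same symbol set) are orthogonal if, when superimposed, each of the $q^2$ ordered pairs of symbols appears the same number of times. A $k$--$\mathrm{MOFR}(m,n;q)$ is a set of $k$ frequency rectangles of type $\mathrm{FR}(m,n;q)$ that are pairwise orthogonal. An orthogonal array $\mathrm{OA}(N,k,q,t)$ is an $N\times k$ array on a symbol set of size $q$ such that in every $N\times t$ subarray each ordered $t$-tuple of symbols appears as a row the same number of times. *)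

(* Defs.v *)
From mathcomp Require Import all_boot all_algebra.
Set Implicit Arguments. Unset Strict Implicit. Unset Printing Implicit Defensive.

Definition is_FR (m n q : nat) (A : 'M['I_q]_(m, n)) : Prop :=
  (q %| n) /\ (q %| m) /\
  (forall (i : 'I_m) (s : 'I_q), #|[set j : 'I_n | A i j == s]| = n %/ q) /\
  (forall (j : 'I_n) (s : 'I_q), #|[set i : 'I_m | A i j == s]| = m %/ q).

Definition FR_orth (m n q : nat) (A B : 'M['I_q]_(m, n)) : Prop :=
  exists lambda : nat, forall s t : 'I_q,
    #|[set ij : 'I_m * 'I_n | (A ij.1 ij.2 == s) && (B ij.1 ij.2 == t)]| = lambda.

Definition is_MOFR (k m n q : nat) (F : 'I_k -> 'M['I_q]_(m, n)) : Prop :=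
  (forall a, is_FR (F a)) /\ (forall a b : 'I_k, a != b -> FR_orth (F a) (F b)).

Definition is_OA (N k q t : nat) (A : 'M['I_q]_(N, k)) : Prop :=
  forall c : 'I_t -> 'I_k, injective c ->
    exists lambda : nat, forall u : 'I_t -> 'I_q,
      #|[set r : 'I_N | [forall l : 'I_t, A r (c l) == u l]]| = lambda.

(* Main.v *)
Require Import Defs.
From mathcomp Require Import all_boot all_algebra zify.
Set Implicit Arguments. Unset Strict Implicit. Unset Printing Implicit Defensive.

Lemma h2_lt N (x : 'I_N) (b : bool) : b + 2 * x < 2 * N.
Proof. have := ltn_ord x; case: b => /=; lia. Qed.
Definition h2 N (p : 'I_N * bool) : 'I_(2 * N) := Ordinal (h2_lt p.1 p.2).
Lemma u2_lt N (i : 'I_(2 * N)) : i %/ 2 < N.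
Proof. have := ltn_ord i; lia. Qed.
Definition u2 N (i : 'I_(2 * N)) : 'I_N * bool := (Ordinal (u2_lt i), odd i).
Lemma u2K N : cancel (@u2 N) (@h2 N).
Proof. move=> i; apply/val_inj => /=. rewrite -modn2. have := divn_eq i 2. lia. Qed.
Lemma h2K N : cancel (@h2 N) (@u2 N).
Proof. case=> x b; rewrite /u2 /h2 /=. congr pair; last first.
  by rewrite oddD oddM /=; case: b.
 apply/val_inj => /=; case: b => /=; lia. Qed.
Lemma h2_bij N : bijective (@h2 N).
Proof. exact: Bijective (@h2K N) (@u2K N). Qed.

Lemma card_split N (P : pred 'I_(2 * N)) :
  #|[set j | P j]| = \sum_(x : 'I_N) (P (h2 (x, true)) + P (h2 (x, false))).
Proof.
rewrite -sum1_card big_mkcond (reindex (@h2 N)) /=; last exact: onW_bij (h2_bij N).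
rewrite -(pair_big xpredT xpredT (fun x b => if h2 (x, b) \in [set j | P j] then 1 else 0)) /=.
apply: eq_bigr => x _; rewrite big_bool !inE.
by case: (P _); case: (P _).
Qed.

Lemma sum_split N (f : 'I_(2 * N) -> nat) :
  \sum_j f j = \sum_(x : 'I_N) (f (h2 (x, true)) + f (h2 (x, false))).
Proof.
rewrite (reindex (@h2 N)) /=; last exact: onW_bij (h2_bij N).
rewrite -(pair_bigA _ (fun x b => f (h2 (x, b)))) /=.
by apply: eq_bigr => x _; rewrite big_bool.
Qed.

Definition b2I (b : bool) : 'I_2 := Ordinal (leq_b1 b : b < 2).
Definition sb (x : 'I_2) : bool := (x : nat) == 1.
Lemma b2I_eq x b : (x == b2I b) = (sb x == b).
Proof. by case: x => [[|[|]]] //= ?; case: b. Qed.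
Lemma forall2 (P : 'I_2 -> bool) : [forall l, P l] = P ord0 && P ord_max.
Proof.
apply/forallP/andP => [H|[H0 H1] l]; first by split; apply: H.
case: l => [[|[|]]] //= Hl.
- by have -> : Ordinal Hl = ord0 by apply/val_inj.
- by have -> : Ordinal Hl = ord_max by apply/val_inj.
Qed.

Definition idx m n (p : 'I_m * 'I_n) : 'I_(m * n) := cast_ord (mxvec_cast m n) (enum_rank p).
Definition idxinv m n (r : 'I_(m * n)) : 'I_m * 'I_n := enum_val (cast_ord (esym (mxvec_cast m n)) r).
Lemma idx_bij m n : bijective (@idx m n).
Proof.
apply: (Bijective (g := @idxinv m n)) => [p|r]; rewrite /idx /idxinv.
  by rewrite cast_ordK enum_rankK.
by rewrite enum_valK cast_ordKV.
Qed.

Definition FM m n k (A : 'M['I_2]_(m * n, k)) (c : 'I_k) : 'M['I_2]_(2 * m, 2 * n) :=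
  \matrix_(i, j) b2I ((u2 i).2 (+) (u2 j).2 (+) sb (A (idx ((u2 i).1, (u2 j).1)) c)).
Lemma FM_h2 m n k (A : 'M['I_2]_(m * n, k)) c p q :
  FM A c (h2 p) (h2 q) = b2I (p.2 (+) q.2 (+) sb (A (idx (p.1, q.1)) c)).
Proof. by rewrite mxE !h2K. Qed.

Theorem mainTheorem1 (m n k : nat) (hm : 0 < m) (hn : 0 < n) (hk : 0 < k) :
  (exists A : 'M['I_2]_(m * n, k), is_OA 2 A) ->
  exists F : 'I_k -> 'M['I_2]_(2 * m, 2 * n), is_MOFR F.
Proof.
case=> A hA; exists (FM A); split.
  move=> c; split; first exact: dvdn_mulr.
  split; first exact: dvdn_mulr.
  split.
    move=> i s; have -> : i = h2 (u2 i) by rewrite u2K.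
    rewrite (card_split (fun j => FM A c (h2 (u2 i)) j == s)) mulKn //.
    rewrite -[RHS]card_ord -sum1_card; apply: eq_bigr => x _.
    rewrite !FM_h2 /= ![_ == s]eq_sym !b2I_eq.
    by move: (sb s) (odd i) (sb (A _ _)) => [] [] [].
  move=> j s; have -> : j = h2 (u2 j) by rewrite u2K.
  rewrite (card_split (fun i => FM A c i (h2 (u2 j)) == s)) mulKn //.
  rewrite -[RHS]card_ord -sum1_card; apply: eq_bigr => x _.
  rewrite !FM_h2 /= ![_ == s]eq_sym !b2I_eq.
  by move: (sb s) (odd j) (sb (A _ _)) => [] [] [].
move=> c d hcd.
pose cc (l : 'I_2) := if l == ord0 then c else d.
have ccinj : injective cc.
  move=> l1 l2; rewrite /cc.
  case: l1 => [[|[|]]] //= H1; case: l2 => [[|[|]]] //= H2; try by move/eqP: hcd.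
  - by move=> _; apply/val_inj.
  - by move=> E; move/eqP: hcd; rewrite E.
  - by move=> _; apply/val_inj.
have [lam Hlam] := hA cc ccinj.
have cnt : forall b g : bool,
    \sum_(r : 'I_(m * n)) ((sb (A r c) == b) && (sb (A r d) == g)) = lam.
  move=> b g; rewrite -(Hlam (fun l => if l == ord0 then b2I b else b2I g)).
  rewrite -sum1_card [RHS]big_mkcond /=; apply: eq_bigr => r _.
  by rewrite inE forall2 /cc /= !b2I_eq; case: (_ && _).
exists (2 * (lam + lam)) => s t.
rewrite -sum1_card big_mkcond /=.
under eq_bigr => p _ do rewrite inE.
rewrite -(pair_bigA _ (fun i j => if (FM A c i j == s) && (FM A d i j == t) then 1 else 0)) /=.
rewrite sum_split.
under eq_bigr => x _ do rewrite !(sum_split (fun j => if _ then _ else _)).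
transitivity (\sum_(x : 'I_m) \sum_(y : 'I_n)
   (2 * (((sb (A (idx (x, y)) c) == sb s) && (sb (A (idx (x, y)) d) == sb t)) +
         ((sb (A (idx (x, y)) c) == ~~ sb s) && (sb (A (idx (x, y)) d) == ~~ sb t))))).
  apply: eq_bigr => x _; rewrite -!big_split /=; apply: eq_bigr => y _.
  rewrite !FM_h2 /= ![_ == s]eq_sym ![_ == t]eq_sym !b2I_eq.
  by case: (sb s); case: (sb t); case: (sb (A _ c)); case: (sb (A _ d)).
rewrite pair_bigA /= -big_distrr /= big_split /=.
have cnt2 : forall b g : bool,
    \sum_(p : 'I_m * 'I_n) ((sb (A (idx (p.1, p.2)) c) == b) && (sb (A (idx (p.1, p.2)) d) == g)) = lam.
  move=> b g; rewrite -(cnt b g) (reindex (@idx m n)) /=; last by apply: onW_bij; apply: idx_bij.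
  by apply: eq_bigr => -[x y] _.
by rewrite !cnt2.
Qed.
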